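(* Let $f:\mathbb R^n\to\mathbb R$ be convex, differentiable and $L$-Lipschitz smooth, let $g:\mathbb R^n\to\mathbb R\cup\{+\infty\}$ be proper, closed and convex, and let $F=f+g$. Let $\epsilon\ge0$, $\rho>0$, $x\in\mathbb R^n$, and let $\tilde x\approx_\epsilon T_\rho(x)$. Then $$\|x-\tilde x\|\ge (L+\rho)^{-1}\operatorname{dist}\big(\mathbf 0\,\big|\,\partial_\epsilon F(\tilde x)\big).$$
   Context: $f$ is $L$-Lipschitz smooth means $D_f(x,y):=f(x)-f(y)-\langle\nabla f(y),x-y\rangle\le\frac L2\|x-y\|^2$ for all $x,y$ (equivalently, for convex differentiable $f$, $\nabla f$ is $L$-Lipschitz). For a proper $h$, $\epsilon\ge0$, $\partial_\epsilon h(\bar x)=\{v:\langle v,x-\bar x\rangle\le h(x)-h(\bar x)+\epsilon\ \forall x\}$ for $\bar x\in\operatorname{dom}h$, and $\emptyset$ otherwise. The inexact proximal gradient relation $\tilde x\approx_\epsilon T_\rho(x)$ means $\mathbf 0\in\nabla f(x)-\rho(x-\tilde x)+\partial_\epsilon g(\tilde x)$. $\operatorname{dist}(\mathbf 0|S)=\inf_{s\in S}\|s\|$, Euclidean norm. *)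

(* Defs.v *)
From HB Require Import structures.
From mathcomp Require Import all_boot all_order all_algebra.
From mathcomp Require Import all_classical all_reals all_analysis.
Set Implicit Arguments. Unset Strict Implicit. Unset Printing Implicit Defensive.
Import Order.TTheory GRing.Theory Num.Theory.
Import numFieldNormedType.Exports.
Local Open Scope classical_set_scope.
Local Open Scope ring_scope.

Section Defs.
Variables (R : realType) (n : nat).
Local Notation vec := 'rV[R]_n.

Definition dotv (u v : vec) : R := \sum_(i < n) u ord0 i * v ord0 i.
Definition enorm (u : vec) : R := Num.sqrt (dotv u u).

Definition grad (f : vec -> R) (x : vec) : vec :=
  \row_(i < n) ('d f x : vec -> R) (delta_mx ord0 i).

Definition convex_fun (f : vec -> R) : Prop :=
  forall x y : vec, forall t : R, 0 <= t <= 1 ->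
    f (t *: x + (1 - t) *: y) <= t * f x + (1 - t) * f y.

Definition breg (f : vec -> R) (x y : vec) : R :=
  f x - f y - dotv (grad f y) (x - y).
Definition lipschitz_smooth (f : vec -> R) (L : R) : Prop :=
  forall x y, breg f x y <= L / 2 * enorm (x - y) ^+ 2.

Definition proper_fun (g : vec -> \bar R) : Prop :=
  (exists x, (g x < +oo)%E) /\ (forall x, (-oo < g x)%E).
Definition closed_fun (g : vec -> \bar R) : Prop :=
  closed [set p : vec * R | (g p.1 <= (p.2)%:E)%E].
Definition convex_efun (g : vec -> \bar R) : Prop :=
  forall x y : vec, forall t : R, 0 < t < 1 ->
    (g (t *: x + (1 - t) *: y)%R <= t%:E * g x + (1 - t)%:E * g y)%E.

(* epsilon-subdifferential; empty outside dom h (dom h = finite values,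
   h is proper when used) *)
Definition eps_subdiff (h : vec -> \bar R) (eps : R) (xb : vec) : set vec :=
  [set v | h xb \is a fin_num /\
     forall x, ((dotv v (x - xb)%R)%:E <= h x - h xb + eps%:E)%E].

Definition inexact_prox (f : vec -> R) (g : vec -> \bar R)
    (eps rho : R) (x xt : vec) : Prop :=
  exists2 v, eps_subdiff g eps xt v &
    grad f x - rho *: (x - xt) + v = 0.

(* dist(0 | S) as an extended real (inf of empty set = +oo) *)
Definition dist0 (S : set vec) : \bar R :=
  ereal_inf [set (enorm v)%:E | v in S].

End Defs.

(* Main.v *)
Require Import Defs.
From HB Require Import structures.
From mathcomp Require Import all_boot all_order all_algebra.
From mathcomp Require Import all_classical all_reals all_analysis.
From mathcomp Require Import lra ring.
Set Implicit Arguments. Unset Strict Implicit.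
Import Order.TTheory GRing.Theory Num.Theory.
Import numFieldNormedType.Exports.
Local Open Scope classical_set_scope.
Local Open Scope ring_scope.

Lemma dotv_grad (R : realType) (n : nat) (f : 'rV[R]_n -> R) a h :
  dotv (grad f a) h = ('d f a : 'rV[R]_n -> R) h.
Proof.
rewrite /dotv /grad.
rewrite {2}(matrix_sum_delta h) big_ord1 linear_sum /=.
apply: eq_bigr => i _; rewrite mxE linearZ /= mulrC.
by rewrite (ord1 ord0).
Qed.
Lemma dir_le (R : realType) (n : nat) (f : 'rV[R]_n -> R) a v c :
  derivable f a v ->
  (forall h : R, 0 < h <= 1 -> h^-1 *: (f (h *: v + a) - f a) <= c) ->
  'D_v f a <= c.
Proof.
move=> df H.
have L1 : (fun h : R => h^-1 *: ((f \o shift a) (h *: v) - f a)) @ 0^' --> 'D_v f a.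
  exact: df.
have L2 : (fun h : R => h^-1 *: ((f \o shift a) (h *: v) - f a)) @ 0^'+ --> 'D_v f a.
  apply: cvg_trans L1; apply: cvg_app => P /=.
  rewrite /dnbhs /within /= => HP.
  move: HP => /= HP; rewrite /at_right /within /=. have HP2 : \forall y \near nbhs (0:R), y != 0 -> P y := HP. have : \forall y \near nbhs (0:R), 0 < y -> P y. apply: filterS HP2 => y Hy ypos; apply: Hy; exact: lt0r_neq0. exact.
apply: (cvgr_to_le L2).
near=> h.
apply: H.
apply/andP; split.
  by near: h; exact: nbhs_right_gt.
  by near: h; exact: nbhs_right_le.
Unshelve. all: by end_near. Qed.

Lemma conv_grad (R : realType) (n : nat) (f : 'rV[R]_n -> R) a z :
  convex_fun f -> differentiable f a ->
  dotv (grad f a) (z - a) <= f z - f a.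
Proof.
move=> cf df.
rewrite dotv_grad -deriveE //.
apply: dir_le; first exact: diff_derivable.
move=> t /andP[t0 t1].
have E : t *: (z - a) + a = t *: z + (1 - t) *: a.
  by rewrite scalerBr scalerBl scale1r [a - _]addrC addrA.
rewrite E.
have := cf z a t; rewrite (ltW t0) t1 => /(_ isT) Hc.
rewrite /GRing.scale /= ler_pdivrMl //.
rewrite lerBlDr; apply: le_trans Hc _.
rewrite mulrBr mulrBl mul1r.
lra.
Qed.

Section Dot.
Variables (R : realType) (n : nat).
Implicit Types u v w : 'rV[R]_n.
Lemma dotvC u v : dotv u v = dotv v u.
Proof. by apply: eq_bigr => i _; rewrite mulrC. Qed.
Lemma dotvDl u v w : dotv (u + v) w = dotv u w + dotv v w.
Proof. by rewrite /dotv -big_split; apply: eq_bigr => i _; rewrite mxE mulrDl. Qed.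
Lemma dotvZl (k : R) u w : dotv (k *: u) w = k * dotv u w.
Proof. by rewrite /dotv mulr_sumr; apply: eq_bigr => i _; rewrite mxE mulrA. Qed.
Lemma dotvNl u w : dotv (- u) w = - dotv u w.
Proof. by rewrite -scaleN1r dotvZl mulN1r. Qed.
Lemma dotvBl u v w : dotv (u - v) w = dotv u w - dotv v w.
Proof. by rewrite dotvDl dotvNl. Qed.
Lemma dotvDr u v w : dotv w (u + v) = dotv w u + dotv w v.
Proof. by rewrite dotvC dotvDl !(dotvC w). Qed.
Lemma dotvZr (k : R) u w : dotv w (k *: u) = k * dotv w u.
Proof. by rewrite dotvC dotvZl dotvC. Qed.
Lemma dotvNr u w : dotv w (- u) = - dotv w u.
Proof. by rewrite dotvC dotvNl dotvC. Qed.
Lemma dotvBr u v w : dotv w (u - v) = dotv w u - dotv w v.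
Proof. by rewrite dotvDr dotvNr. Qed.
Lemma dotv_ge0 u : 0 <= dotv u u.
Proof. by apply: sumr_ge0 => i _; rewrite -expr2 sqr_ge0. Qed.
Lemma enorm2 u : enorm u ^+ 2 = dotv u u.
Proof. by rewrite /enorm sqr_sqrtr // dotv_ge0. Qed.
Lemma dot_sq (k : R) u d : dotv (k *: u - d) (k *: u - d) =
  k ^+ 2 * dotv u u - 2 * k * dotv d u + dotv d d.
Proof.
rewrite dotvBl !dotvBr !dotvZl !dotvZr (dotvC u d).
rewrite expr2; ring.
Qed.
End Dot.

Lemma sc3 (R : realType) (L t fz fz' fx fxt A B Au Bu DD : R) :
 DD = A - B -> Bu - t*B <= fz - fxt -> fz - fx + t*A <= L/2 * - - (t*(t*DD)) ->
 t*A - Au <= fz' - fx -> fz' - fxt - t*B <= L/2*(t*(t*DD)) ->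
 (2*t - L*t*t)*DD <= Au - Bu.
Proof.
move=> E H5 H6 H7 H8.
have E2 : t*DD = t*A - t*B by rewrite E mulrBr.
rewrite opprK in H6.
lra.
Qed.

Lemma sc5 (R : realType) (p q fy fxt s r e : R) : p <= fy - fxt -> q <= s - r + e ->
  p + q <= fy + s + - (fxt + r) + e.
Proof. lra. Qed.

Lemma sc1 (R : realType) (p q r s : R) : q <= p - s -> - r <= s - p -> 0 <= r - q.
Proof. lra. Qed.
Lemma sc2 (R : realType) (L U p q r s : R) : p - s - q <= L / 2 * U -> s - p + r <= L / 2 * U -> r - q <= L * U.
Proof. lra. Qed.

Lemma scal (R : realType) (L rho UU DU DD : R) : 0 < rho -> 0 <= UU -> 0 <= DD ->
  0 <= DU -> DU <= L * UU -> (forall t, 0 <= t -> (2 * t - L * t * t) * DD <= DU) ->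
  rho ^+ 2 * UU - 2 * rho * DU + DD <= (L + rho) ^+ 2 * UU.
Proof.
move=> r0 U0 D0 DU0 DUL H.
have [L0|L0] := ltrP 0 L.
  have := H L^-1; rewrite invr_ge0 (ltW L0) => /(_ isT) HL.
  have E : (2 * L^-1 - L * L^-1 * L^-1) = L^-1.
    by rewrite mulfV ?gt_eqF // mul1r; lra.
  rewrite E in HL.
  have HL2 : DD <= L * DU.
    by rewrite -ler_pdivrMl // mulrC.
  nra.
have := H 1 ler01 => H1.
nra.
Qed.

Unset Implicit Arguments. Set Strict Implicit.

Theorem lemma2p14 (R : realType) (n : nat) (f : 'rV[R]_n -> R)
  (g : 'rV[R]_n -> \bar R) (L eps rho : R) (x xt : 'rV[R]_n) :
  convex_fun f -> (forall y, differentiable f y) -> lipschitz_smooth f L ->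
  proper_fun g -> closed_fun g -> convex_efun g ->
  0 <= eps -> 0 < rho ->
  inexact_prox f g eps rho x xt ->
  ((L + rho)^-1%:E * dist0 (eps_subdiff (fun y => (f y)%:E + g y)%E eps xt)
     <= (enorm (x - xt))%:E)%E.
Proof.
move=> cf df ls _ _ _ e0 r0 [v [gfin Hv] Heq].
have Cg y z : dotv (grad f z) (y - z) <= f y - f z by exact: conv_grad.
have S y z : f y - f z - dotv (grad f z) (y - z) <= L / 2 * dotv (y - z) (y - z).
  by rewrite -enorm2; exact: ls.
set a := grad f x; set b := grad f xt; set u := x - xt; set d := a - b.
have Ev : v = rho *: u - a.
  by rewrite -[v](addKr (a - rho *: u)) Heq addr0 opprB.
set w := b + v.
have Ew : w = rho *: u - d by rewrite /w Ev /d opprB addrCA.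
have EDD : dotv d d = dotv a d - dotv b d by rewrite dotvBl.
have EDU : dotv d u = dotv a u - dotv b u by rewrite dotvBl.
have Nu : xt - x = - u by rewrite opprB.
have H1 := Cg x xt. have H2 := Cg xt x. have H3 := S x xt. have H4 := S xt x.
rewrite -/u -/b in H1 H3. rewrite -/a Nu dotvNr in H2 H4. rewrite dotvNl dotvNr !opprK in H4.
have DU0 : 0 <= dotv d u.
  by rewrite EDU; exact: sc1 H1 H2.
have DUL : dotv d u <= L * dotv u u.
  by rewrite EDU; exact: sc2 H3 H4.
have key : forall t, 0 <= t -> (2 * t - L * t * t) * dotv d d <= dotv d u.
  move=> t t0.
  have E1 : x - t *: d - xt = u - t *: d by rewrite addrAC.
  have E2 : x - t *: d - x = - (t *: d) by rewrite addrAC subrr add0r.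
  have E3 : xt + t *: d - x = t *: d - u by rewrite /u opprB addrAC addrC.
  have E4 : xt + t *: d - xt = t *: d by rewrite addrAC subrr add0r.
  have H5 := Cg (x - t *: d) xt. have H6 := S (x - t *: d) x.
  have H7 := Cg (xt + t *: d) x. have H8 := S (xt + t *: d) xt.
  rewrite -/a -/b E1 E2 E3 E4 in H5 H6 H7 H8.
  rewrite dotvBr dotvZr in H5.
  rewrite dotvNr dotvZr dotvNl dotvNr dotvZl dotvZr opprK in H6.
  rewrite dotvBr dotvZr in H7.
  rewrite dotvZr dotvZl dotvZr in H8.
  rewrite EDU; exact: (sc3 EDD H5 H6 H7 H8).
have Hw2 : dotv w w <= (L + rho) ^+ 2 * dotv u u.
  have := scal r0 (dotv_ge0 u) (dotv_ge0 d) DU0 DUL key.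
  by rewrite Ew dot_sq.
have Hmem : eps_subdiff (fun y => (f y)%:E + g y)%E eps xt w.
  split; first by rewrite fin_numD gfin.
  move=> y; have Hf := Cg y xt; have Hg := Hv y.
  rewrite /w dotvDl EFinD.
  move: gfin Hg; case: (g xt) => [r| |] //= _; case: (g y) => [s| |] //= Hg.
    rewrite -!EFinD lee_fin; rewrite -?EFinD lee_fin in Hg.
    exact: sc5 Hf Hg.
  rewrite addey // (@addye _ (- (f xt + r))%:E) // (@addye _ eps%:E) //; exact: leey.
  have Hd : (dist0 (eps_subdiff (fun y => (f y)%:E + g y)%E eps xt) <= (enorm w)%:E)%E.
  by apply: ge_ereal_inf; exists (enorm w)%:E => //; exists w.
have Hd0 : (0 <= dist0 (eps_subdiff (fun y => (f y)%:E + g y)%E eps xt))%E.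
  by apply/ereal_infP => _ [z _ <-]; rewrite lee_fin /enorm sqrtr_ge0.
have [Lr|Lr] := ltrP 0 (L + rho).
  apply: le_trans (lee_wpmul2l _ Hd) _; first by rewrite lee_fin invr_ge0 ltW.
  rewrite -EFinM lee_fin ler_pdivrMl //.
  rewrite /enorm -(ger0_norm (ltW Lr)) -sqrtr_sqr -sqrtrM ?sqr_ge0 //.
  by rewrite ler_sqrt // mulr_ge0 ?sqr_ge0 ?dotv_ge0.
apply: le_trans (mule_le0_ge0 _ Hd0) _; first by rewrite lee_fin invr_le0.
by rewrite lee_fin /enorm sqrtr_ge0.
Qed.
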